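(* Let $m\le t/100$. For any communication protocol $\Pi$ for the $m$-party $\textsf{MostlyEq}$ problem with failure probability $\Pr[\Pi(\boldsymbol P_U)=1]+\Pr[\Pi(\boldsymbol P_{Eq})=0]<0.1$, we have $\mathrm I\big(\Pi(\boldsymbol P_U);\boldsymbol P_U\big)=\Omega(1)$, i.e. the mutual information between the transcript and the input, when the input is drawn from $\boldsymbol P_U$, is at least an absolute constant.
   Context: In the $m$-party $\textsf{MostlyEq}$ problem, party $i$ holds $z_i\in[t]$, and $(z_1,\dots,z_m)$ is drawn from one of: $\boldsymbol P_U$, where the $z_i$ are i.i.d. uniform on $[t]$; or $\boldsymbol P_{Eq}$, where $\alpha$ is uniform in $[t]$ and independently each $z_i=\alpha$ with probability $1/2$ and otherwise is uniform on $[t]$. The parties communicate (possibly with private randomness) and the protocol outputs $1$ to indicate $\boldsymbol P_{Eq}$ and $0$ to indicate $\boldsymbol P_U$; $\Pi(\cdot)$ denotes the transcript on an input from the given distribution. *)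

(* Defs.v *)
From mathcomp Require Import all_boot all_order all_algebra.
From mathcomp Require Import reals exp.
Set Implicit Arguments. Unset Strict Implicit. Unset Printing Implicit Defensive.
Import Order.TTheory GRing.Theory Num.Theory.
Local Open Scope ring_scope.

Definition input (m t : nat) := {ffun 'I_m -> 'I_t}.

(* A randomized blackboard protocol tree.  At an internal node, party
   [i] writes one bit on the blackboard; with its private randomness it
   writes [true] with probability [p (z i)], depending only on its own
   input (and on the history = position in the tree).  Leaves carry the
   output bit (1 = "P_Eq", 0 = "P_U"). *)
Inductive protocol (R : Type) (m t : nat) : Type :=
| Leaf of bool
| Node of 'I_m & ('I_t -> R) & protocol R m t & protocol R m t.
Arguments Leaf {R m t}.
Arguments Node {R m t}.

Section Proto.
Variables (R : realType) (m t : nat).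

Fixpoint valid (P : protocol R m t) : Prop :=
  match P with
  | Leaf _ => True
  | Node _ p c0 c1 => (forall a, 0 <= p a <= 1) /\ valid c0 /\ valid c1
  end.

Fixpoint transcripts (P : protocol R m t) : seq (seq bool) :=
  match P with
  | Leaf _ => [:: [::]]
  | Node _ _ c0 c1 =>
      map (cons false) (transcripts c0) ++ map (cons true) (transcripts c1)
  end.

Fixpoint trprob (P : protocol R m t) (z : input m t) (tau : seq bool) : R :=
  match P, tau with
  | Leaf _, [::] => 1
  | Leaf _, _ :: _ => 0
  | Node _ _ _ _, [::] => 0
  | Node i p c0 c1, false :: tau' => (1 - p (z i)) * trprob c0 z tau'
  | Node i p c0 c1, true :: tau' => p (z i) * trprob c1 z tau'
  end.

Fixpoint accprob (P : protocol R m t) (z : input m t) : R :=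
  match P with
  | Leaf b => (b : nat)%:R
  | Node i p c0 c1 => p (z i) * accprob c1 z + (1 - p (z i)) * accprob c0 z
  end.

Definition PU (z : input m t) : R := (t%:R ^+ m)^-1.

(* P_Eq: alpha uniform; each z_i = alpha w.p. 1/2, else uniform. *)
Definition PEq (z : input m t) : R :=
  t%:R^-1 * \sum_(a : 'I_t)
     \prod_(i : 'I_m) ((z i == a)%:R / 2 + (2 * t%:R)^-1).

Definition failure (P : protocol R m t) : R :=
  \sum_(z : input m t) PU z * accprob P z
  + \sum_(z : input m t) PEq z * (1 - accprob P z).

Definition trmarg (P : protocol R m t) (tau : seq bool) : R :=
  \sum_(z : input m t) PU z * trprob P z tau.

(* I(Pi(P_U); P_U) in nats, with the convention 0 log 0 = 0. *)
Definition mutual_info (P : protocol R m t) : R :=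
  \sum_(tau <- transcripts P) \sum_(z : input m t)
     PU z * trprob P z tau * ln (trprob P z tau / trmarg P tau).

End Proto.

(* Main.v *)
Require Import Defs.
From mathcomp Require Import all_boot all_order all_algebra.
From mathcomp Require Import reals exp sequences.
From mathcomp Require Import ring lra.
Import Order.TTheory GRing.Theory Num.Theory.
Local Open Scope ring_scope.

Section A.
Variable R : realType.

Lemma ln_ge1subV {y : R} : 0 < y -> 1 - y^-1 <= ln y.
Proof.
move=> y0.
have h := @le_ln1Dx R (y^-1 - 1).
have : -1 < y^-1 - 1 by rewrite ltrBrDr addrC subrr invr_gt0.
move=> /h; rewrite addrC subrK lnV ?posrE //.
lra.
Qed.

Lemma xlnx_ge {x : R} : 0 <= x ->
  2 * Num.sqrt x ^+ 2 - 2 * Num.sqrt x <= x * ln x.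
Proof.
move=> x0; rewrite sqr_sqrtr //.
have [->|xp] := eqVneq x 0; first by rewrite sqrtr0 mul0r; lra.
have xp' : 0 < x by rewrite lt_def xp x0.
have sp : 0 < Num.sqrt x by rewrite sqrtr_gt0.
have -> : x * ln x = x * (2 * ln (Num.sqrt x)).
  by rewrite -[in ln x](sqr_sqrtr x0) lnXn // mulr_natl.
have := ln_ge1subV sp.
set s := Num.sqrt x.
have -> : x = s ^+ 2 by rewrite /s sqr_sqrtr.
move=> h.
have : s ^+ 2 * (2 * (1 - s^-1)) <= s ^+ 2 * (2 * ln s).
  by rewrite ler_wpM2l ?sqr_ge0 // ler_wpM2l.
have -> : s ^+ 2 * (2 * (1 - s^-1)) = 2 * s^+2 - 2 * s.
  by field; rewrite gt_eqF.
by [].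
Qed.

Lemma key_pt (x : R) : 0 <= x ->
  (x - 1) / 2 - (x * ln x - x + 1) <= ln ((1 + x) / 2).
Proof.
move=> x0.
have h1 := xlnx_ge x0.
have hp : 0 < (1 + x) / 2 by apply: divr_gt0; lra.
have h2 := ln_ge1subV hp.
set s := Num.sqrt x in h1.
have sx : s ^+ 2 = x by rewrite /s sqr_sqrtr.
have s0 : 0 <= s by rewrite /s sqrtr_ge0.
have e : 1 - ((1 + x) / 2)^-1 = (x - 1) / (x + 1).
  rewrite invf_div; field; lra.
rewrite e in h2.
suff : (x - 1) / 2 - (s - 1) ^+ 2 <= (x - 1) / (x + 1) by move: h1 h2; nra.
rewrite -sx.
have hp2 : 0 < s ^+ 2 + 1 by rewrite ltr_pwDr ?sqr_ge0.
rewrite ler_pdivlMr //.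
rewrite mulrBl -subr_ge0.
have -> : s ^+ 2 - 1 -
  ((s ^+ 2 - 1) / 2 * (s ^+ 2 + 1) - (s - 1) ^+ 2 * (s ^+ 2 + 1)) = ((s - 1) ^+ 2) ^+ 2 / 2 by field.
by apply: divr_ge0; rewrite ?sqr_ge0.
Qed.

Lemma prod_ge1Dsum (n : nat) (y : 'I_n -> R) : (forall i, 0 < y i) ->
  1 + \sum_i ln (y i) <= \prod_i y i.
Proof.
move=> yp.
have -> : \prod_i y i = expR (\sum_i ln (y i)).
  by rewrite expR_sum; apply: eq_bigr => i _; rewrite lnK ?posrE.
exact: expR_ge1Dx.
Qed.

Lemma xlnx_prod (n : nat) (r : 'I_n -> R) : (forall i, 0 <= r i) ->
  (\prod_i r i) * ln (\prod_i r i) = \sum_i (\prod_j r j) * ln (r i).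
Proof.
move=> r0.
case: (boolP [exists i, r i == 0]).
  move=> /existsP [i /eqP ri0].
  have -> : \prod_i r i = 0 by rewrite (bigD1 i) //= ri0 mul0r.
  by rewrite mul0r big1 // => j _; rewrite mul0r.
move=> nz.
have rp : forall i, 0 < r i.
  move=> i; rewrite lt_def r0 andbT; apply/eqP => h; move/negP: nz; apply.
  by apply/existsP; exists i; rewrite h.
rewrite -big_distrr /=; congr (_ * _).
have -> : \prod_i r i = expR (\sum_i ln (r i)).
  by rewrite expR_sum; apply: eq_bigr => i _; rewrite lnK ?posrE.
by rewrite expRK.
Qed.

Section Core.
Variables (m t : nat).
Hypothesis tp : (0 < t)%N.

Lemma tR0 : t%:R != 0 :> R.
Proof. by rewrite pnatr_eq0 -lt0n. Qed.

Lemma PUc_prod : (t%:R ^+ m)^-1 = \prod_(i : 'I_m) (t%:R^-1 : R).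
Proof. by rewrite prodr_const card_ord exprVn. Qed.

Lemma prod_sum (F : 'I_m -> 'I_t -> R) :
  \sum_(z : input m t) \prod_i F i (z i) = \prod_i \sum_a F i a.
Proof. by rewrite bigA_distr_bigA. Qed.

Lemma tensor (rho : 'I_m -> 'I_t -> R) :
  (forall i a, 0 <= rho i a) -> (forall i, \sum_a rho i a = t%:R) ->
  (t%:R ^+ m)^-1 * \sum_(z : input m t)
     (\prod_i rho i (z i)) * ln (\prod_i rho i (z i))
  = \sum_i t%:R^-1 * \sum_a rho i a * ln (rho i a).
Proof.
move=> r0 rs.
under eq_bigr => z _ do rewrite xlnx_prod //.
rewrite exchange_big big_distrr /=; apply: eq_bigr => i _.
pose G j a := rho j a * (if j == i then ln (rho j a) else 1).
transitivity (\sum_(z : input m t) \prod_j (t%:R^-1 * G j (z j))).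
  rewrite big_distrr /=; apply: eq_bigr => z _.
  rewrite big_split /= -PUc_prod; congr (_ * _).
  rewrite /G big_split /=; congr (_ * _).
  rewrite (bigD1 i) //= eqxx big1 ?mulr1 // => j /negbTE ->.
  by [].
rewrite (prod_sum (fun j a => t%:R^-1 * G j a)) (bigD1 i) //=.
rewrite [X in _ * X]big1 ?mulr1.
  by rewrite -big_distrr /G /=; under eq_bigr => a _ do rewrite eqxx.
move=> j /negbTE ji; rewrite -big_distrr /G /=.
under eq_bigr => a _ do rewrite ji mulr1.
by rewrite rs mulVf // tR0.
Qed.

Lemma core (rho : 'I_m -> 'I_t -> R) :
  (forall i a, 0 <= rho i a) -> (forall i, \sum_a rho i a = t%:R) ->
  1 - (t%:R ^+ m)^-1 * \sum_(z : input m t)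
     (\prod_i rho i (z i)) * ln (\prod_i rho i (z i))
  <= t%:R^-1 * \sum_(al : 'I_t) \prod_i ((1 + rho i al) / 2).
Proof.
move=> r0 rs; rewrite tensor //.
have step : forall al : 'I_t,
    1 + \sum_i ln ((1 + rho i al) / 2) <= \prod_i ((1 + rho i al) / 2).
  move=> al; apply: prod_ge1Dsum => i; apply: divr_gt0 => //.
  by rewrite ltr_pwDl.
apply: (@le_trans _ _ (t%:R^-1 * \sum_(al : 'I_t) (1 + \sum_i ln ((1 + rho i al) / 2)))); last first.
  rewrite ler_wpM2l ?invr_ge0 //; exact: ler_sum.
rewrite big_split /= sumr_const card_ord mulrDr.
rewrite mulVf ?tR0 //.
rewrite exchange_big big_distrr /= -sumrN; apply: lerD => //; apply: ler_sum => i _.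
have hs : \sum_(al : 'I_t) ((rho i al - 1) / 2 - (rho i al * ln (rho i al) - rho i al + 1))
   = - \sum_(al : 'I_t) rho i al * ln (rho i al).
  rewrite (eq_bigr (fun al => (3/2) * (rho i al) - 3/2 - rho i al * ln (rho i al))); last first.
    by move=> al _; field.
  rewrite !sumrB -big_distrr /= rs sumr_const card_ord -mulr_natr; ring.
rewrite -mulrN -hs ler_wpM2l ?invr_ge0 //; apply: ler_sum => al _.
exact: key_pt.
Qed.

End Core.

Section Proto2.
Variables (m t : nat).
Implicit Types (P : protocol R m t).

Fixpoint lab P (tau : seq bool) : R :=
  match P, tau with
  | Leaf b, _ => (b : nat)%:R
  | Node _ _ _ _, [::] => 0
  | Node i p c0 c1, false :: tau' => lab c0 tau'
  | Node i p c0 c1, true :: tau' => lab c1 tau'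
  end.

Lemma lab01 P tau : 0 <= lab P tau <= 1.
Proof.
elim: P tau => [b|i p c0 IH0 c1 IH1] [|[] tau] /=;
  try (by case: b; rewrite /= ?lexx ?ler01); by rewrite ?lexx ?ler01.
Qed.

Lemma trprob_ge0 P : valid P -> forall z tau, 0 <= trprob P z tau.
Proof.
elim: P => [b|i p c0 IH0 c1 IH1] /=.
  by move=> _ z [|? ?].
move=> [hp [v0 v1]] z [|[] tau] //=.
  apply: mulr_ge0; [by case/andP: (hp (z i))| exact: IH1].
apply: mulr_ge0; [by case/andP: (hp (z i)) => _; rewrite subr_ge0| exact: IH0].
Qed.

Lemma tr_sum1 P z : \sum_(tau <- transcripts P) trprob P z tau = 1.
Proof.
elim: P => [b|i p c0 IH0 c1 IH1] /=; first by rewrite big_seq1.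
rewrite big_cat !big_map /= -!big_distrr /= IH0 IH1; ring.
Qed.

Lemma acc_dec P z :
  accprob P z = \sum_(tau <- transcripts P) trprob P z tau * lab P tau.
Proof.
elim: P => [b|i p c0 IH0 c1 IH1] /=; first by rewrite big_seq1 mul1r.
rewrite big_cat !big_map /=.
under eq_bigr => tau _ do rewrite -mulrA.
under [X in _ = _ + X]eq_bigr => tau _ do rewrite -mulrA.
by rewrite -!big_distrr /= -IH0 -IH1 addrC.
Qed.

Lemma update (i : 'I_m) (f : 'I_t -> R) (q : 'I_m -> 'I_t -> R) (z : input m t) :
  \prod_j (if j == i then f (z j) * q j (z j) else q j (z j))
  = f (z i) * \prod_j q j (z j).
Proof.
rewrite (bigD1 i) //= eqxx [in RHS](bigD1 i) //= mulrA; congr (_ * _).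
by apply: eq_bigr => j /negbTE ->.
Qed.

Lemma rect P : valid P -> forall tau, exists (k : R) (q : 'I_m -> 'I_t -> R),
  [/\ 0 <= k, (forall i a, 0 <= q i a) &
      forall z, trprob P z tau = k * \prod_i q i (z i)].
Proof.
elim: P => [b|i p c0 IH0 c1 IH1] /=.
  move=> _ [|? ?].
    by exists 1, (fun _ _ => 1); split => // z; rewrite big1 // mulr1.
  by exists 0, (fun _ _ => 1); split => // z; rewrite mul0r.
move=> [hp [v0 v1]] [|[] tau].
- by exists 0, (fun _ _ => 1); split => // z; rewrite mul0r.
- have [k [q [k0 q0 e]]] := IH1 v1 tau.
  exists k, (fun j a => if j == i then p a * q j a else q j a); split => //.
    move=> j a; case: (j == i) => //; apply: mulr_ge0 => //.
    by case/andP: (hp a).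
  by move=> z; rewrite update e mulrCA.
- have [k [q [k0 q0 e]]] := IH0 v0 tau.
  exists k, (fun j a => if j == i then (1 - p a) * q j a else q j a); split => //.
    move=> j a; case: (j == i) => //; apply: mulr_ge0 => //.
    by case/andP: (hp a) => _; rewrite subr_ge0.
  by move=> z; rewrite (update i (fun a => 1 - p a)) e mulrCA.
Qed.

End Proto2.

Section Main.
Variables (m t : nat).
Hypothesis tp : (0 < t)%N.
Implicit Types (P : protocol R m t).

Definition Info P tau := \sum_(z : input m t)
  PU R z * trprob P z tau * ln (trprob P z tau / trmarg P tau).
Definition EqP P tau := \sum_(z : input m t) PEq R z * trprob P z tau.

Lemma PU_gt0 (z : input m t) : 0 < PU R z.
Proof. by rewrite /PU invr_gt0 exprn_gt0 // ltr0n. Qed.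

Lemma PEq_ge0 (z : input m t) : 0 <= PEq R z.
Proof.
rewrite /PEq; apply: mulr_ge0; first by rewrite invr_ge0.
apply: sumr_ge0 => a _; apply: prodr_ge0 => i _; apply: addr_ge0.
  by apply: divr_ge0.
by rewrite invr_ge0 mulr_ge0.
Qed.

Lemma sumPU : \sum_(z : input m t) PU R z = 1.
Proof.
rewrite /PU (PUc_prod m t) (prod_sum m t (fun _ _ => t%:R^-1)).
rewrite big1 // => i _; rewrite sumr_const card_ord -(mulr_natr (t%:R^-1)) mulVf //.
exact: (tR0 t tp).
Qed.

Lemma marg_ge0 P : valid P -> forall tau, 0 <= trmarg P tau.
Proof.
move=> vP tau; apply: sumr_ge0 => z _; apply: mulr_ge0; last exact: trprob_ge0.
exact: ltW (PU_gt0 z).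
Qed.

Lemma marg0 P : valid P -> forall tau, trmarg P tau = 0 ->
  forall z, trprob P z tau = 0.
Proof.
move=> vP tau /eqP; rewrite psumr_eq0; last first.
  move=> z _; apply: mulr_ge0; [exact: ltW (PU_gt0 z)| exact: trprob_ge0].
move=> /allP h z; have := h z; rewrite mem_index_enum => /(_ isT).
by rewrite mulf_eq0 gt_eqF ?PU_gt0 //= => /eqP.
Qed.

Lemma Info0 P tau : valid P -> trmarg P tau = 0 -> Info P tau = 0.
Proof.
move=> vP M0; rewrite /Info big1 // => z _.
by rewrite (marg0 P vP tau M0) mulr0 mul0r.
Qed.

Lemma Info_ge0 P tau : valid P -> 0 <= Info P tau.
Proof.
move=> vP; have := marg_ge0 P vP tau; rewrite le_eqVlt => /orP [/eqP M0|Mp].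
  by rewrite Info0.
set M := trmarg P tau in Mp *.
apply: (@le_trans _ _ (\sum_(z : input m t) PU R z * (trprob P z tau - M))).
  rewrite (eq_bigr (fun z => PU R z * trprob P z tau - M * PU R z)); last first.
    by move=> z _; ring.
  rewrite sumrB. have -> : \sum_(z : input m t) PU R z * trprob P z tau = M by []. 
  by rewrite -big_distrr /= sumPU mulr1 subrr.
apply: ler_sum => z _; rewrite -mulrA ler_wpM2l ?(ltW (PU_gt0 z)) //.
have := @trprob_ge0 _ _ P vP z tau; rewrite le_eqVlt => /orP [/eqP <-|trp].
  by rewrite mul0r sub0r oppr_le0 ltW.
have y0 : 0 < trprob P z tau / M by apply: divr_gt0.
have := ln_ge1subV y0; rewrite invf_div => h.
have : trprob P z tau * (1 - M / trprob P z tau) <=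
       trprob P z tau * ln (trprob P z tau / M) by rewrite ler_wpM2l // ltW.
by rewrite mulrBr mulr1 mulrCA divff ?mulr1 // gt_eqF.
Qed.


Lemma mu_sum (r : 'I_t -> R) (al : 'I_t) : \sum_a r a = t%:R ->
  \sum_a (((a == al)%:R / 2 + (2 * t%:R)^-1) * r a) = (1 + r al) / 2.
Proof.
move=> rs.
under eq_bigr => a _ do rewrite mulrDl.
rewrite big_split /= -big_distrr /= rs (bigD1 al) //= eqxx big1 ?addr0.
  by rewrite /=; field; exact: (tR0 t tp).
by move=> a /negbTE ->; rewrite /= !mul0r.
Qed.

Lemma Eq_bound P tau : valid P -> trmarg P tau - Info P tau <= EqP P tau.
Proof.
move=> vP; have := marg_ge0 P vP tau; rewrite le_eqVlt => /orP [/eqP M0|Mp].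
  rewrite Info0 // -M0 subrr; apply: sumr_ge0 => z _; apply: mulr_ge0.
    exact: PEq_ge0.
  exact: (@trprob_ge0 _ _ P vP z tau).
have [k [q [k0 q0 e]]] := @rect _ _ P vP tau.
set M := trmarg P tau in Mp *.
pose A i := \sum_a t%:R^-1 * q i a.
have eM : M = k * \prod_i A i.
  rewrite /M /trmarg (eq_bigr (fun z : input m t => k * \prod_i (t%:R^-1 * q i (z i)))); last first.
    by move=> z _; rewrite e /PU (PUc_prod m t) mulrCA -big_split.
  by rewrite -big_distrr /= (prod_sum m t (fun i a => t%:R^-1 * q i a)).
have A0 : forall i, 0 <= A i.
  by move=> i; apply: sumr_ge0 => a _; rewrite mulr_ge0 // invr_ge0.
have Ap : forall i, 0 < A i.
  move=> i; rewrite lt_def A0 andbT; apply/eqP => Ai0.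
  by move: Mp; rewrite eM (bigD1 i) //= Ai0 mul0r mulr0 ltxx.
pose rho i a := q i a / A i.
have r0 : forall i a, 0 <= rho i a by move=> i a; apply: divr_ge0; [exact: q0 | exact: A0].
have rs : forall i, \sum_a rho i a = t%:R.
  move=> i; rewrite -big_distrl /= /A -big_distrr /=.
  have sq0 : \sum_a q i a != 0.
    by have := Ap i; rewrite /A -big_distrr /= => /gt_eqF /negbT; rewrite mulf_eq0 negb_or => /andP [].
  by field; rewrite sq0 tR0.
pose F (z : input m t) := \prod_i rho i (z i).
have etr : forall z, trprob P z tau = M * F z.
  move=> z; rewrite e eM /F -mulrA -big_split /=; congr (_ * _).
  by apply: eq_bigr => i _; rewrite /rho mulrC divfK // gt_eqF.
have eI : Info P tau = M * ((t%:R ^+ m)^-1 * \sum_(z : input m t) F z * ln (F z)).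
  rewrite /Info big_distrr big_distrr /=; apply: eq_bigr => z _.
  rewrite etr /PU -/M (mulrC M (F z)) mulfK ?gt_eqF //; ring.
have eE : EqP P tau = M * (t%:R^-1 * \sum_(al : 'I_t) \prod_i ((1 + rho i al) / 2)).
  rewrite /EqP /PEq.
  pose mu (al a : 'I_t) : R := (a == al)%:R / 2 + (2 * t%:R)^-1.
  rewrite (eq_bigr (fun z : input m t => M * t%:R^-1 *
       \sum_(al : 'I_t) \prod_i (mu al (z i) * rho i (z i)))); last first.
    move=> z _; rewrite etr /F.
    have -> : \sum_(al : 'I_t) \prod_i (mu al (z i) * rho i (z i)) =
       (\sum_(al : 'I_t) \prod_i mu al (z i)) * \prod_i rho i (z i).
      by rewrite big_distrl; apply: eq_bigr => al _; rewrite big_split.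
    rewrite /mu; ring.
  rewrite -big_distrr /= exchange_big -mulrA; congr (_ * (_ * _)).
  apply: eq_bigr => al _.
  rewrite (prod_sum m t (fun i a => mu al a * rho i a)).
  by apply: eq_bigr => i _; rewrite /mu mu_sum.
rewrite eI eE -[X in X - _]mulr1 -mulrBr; apply: ler_wpM2l; first exact: ltW.
exact: core.
Qed.



Lemma fail_ge P : valid P -> 1 - mutual_info P <= failure P.
Proof.
move=> vP.
have eF : failure P = \sum_(tau <- transcripts P)
    (lab m t P tau * trmarg P tau + (1 - lab m t P tau) * EqP P tau).
  rewrite /failure big_split /=; congr (_ + _).
  - rewrite (eq_bigr (fun z : input m t => \sum_(tau <- transcripts P)
        PU R z * (trprob P z tau * lab m t P tau))); last first.
      by move=> z _; rewrite acc_dec big_distrr.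
    rewrite exchange_big /=; apply: eq_bigr => tau _.
    rewrite /trmarg big_distrr /=; apply: eq_bigr => z _; ring.
  - rewrite (eq_bigr (fun z : input m t => \sum_(tau <- transcripts P)
        PEq R z * (trprob P z tau - trprob P z tau * lab m t P tau))); last first.
      by move=> z _; rewrite acc_dec -{1}(tr_sum1 m t P z) -sumrB big_distrr.
    rewrite exchange_big /=; apply: eq_bigr => tau _.
    rewrite /EqP big_distrr /=; apply: eq_bigr => z _; ring.
have e1 : \sum_(tau <- transcripts P) trmarg P tau = 1.
  rewrite /trmarg exchange_big /=.
  rewrite -sumPU; apply: eq_bigr => z _.
  by rewrite -big_distrr /= tr_sum1 mulr1.
rewrite eF -[X in X - _ <= _]e1 /mutual_info -sumrB; apply: ler_sum => tau _.
have key : trmarg P tau - Info P tau <=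
    lab m t P tau * trmarg P tau + (1 - lab m t P tau) * EqP P tau.
  have h1 := Eq_bound P tau vP.
  have h2 := Info_ge0 P tau vP.
  have /andP [l0 l1] := lab01 m t P tau.
  have h3 : 0 <= (1 - lab m t P tau) * (EqP P tau - (trmarg P tau - Info P tau)).
    by apply: mulr_ge0; rewrite subr_ge0.
  have h4 : 0 <= lab m t P tau * Info P tau by apply: mulr_ge0.
  nra.
exact: key.
Qed.

End Main.
End A.

Theorem lemma5p2 (R : realType) :
  exists c : R, 0 < c /\
    forall (t m : nat), (0 < t)%N -> (100 * m <= t)%N ->
    forall P : protocol R m t, valid P ->
      failure P < 1 / 10 ->
      c <= mutual_info P.
Proof.
exists (1/2); split; first by rewrite divr_gt0.
move=> t m tp _ P vP hf.
have := @fail_ge R m t tp P vP.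
lra.
Qed.
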